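(* In a run of Algorithm 1 (described in the context), let $(\mathcal R_k,\delta_k)$ be the open leaf selected at the $k$-th iteration. If the overlap $\gamma$ is positive and the algorithm does not terminate sooner, then there is a $k$ such that $\mathcal R_k\subset\psi\mathbb B+\theta_o$ for some $\theta_o\in\Theta$.
   Context: Problem data: positive integers $p,n,m,d,l$; a convex cone $\mathcal K\subseteq\mathbb R^d$ (a product of convex cones); functions $f,g,h$ on $\mathbb R^p\times\mathbb R^n\times\mathbb R^m$ with values in $\mathbb R,\mathbb R^l,\mathbb R^d$, such that for each fixed $\delta\in\{0,1\}^m$, $(\theta,x)\mapsto f(\theta,x,\delta)$ is jointly convex and $(\theta,x)\mapsto g(\theta,x,\delta),h(\theta,x,\delta)$ are affine. $V^*_\delta(\theta)\in\mathbb R\cup\{+\infty\}$ is the optimal value of: minimize $f(\theta,x,\delta)$ over $x$ s.t. $g(\theta,x,\delta)=0$, $h(\theta,x,\delta)\in\mathcal K$; $\Theta^*_\delta$ is its feasible parameter set; $V^*=\min_\delta V^*_\delta$, $\Theta^*=\bigcup_\delta\Theta^*_\delta$. $\Theta\subseteq\Theta^*$ is a convex full-dimensional polytope, $\epsilon_{\mathrm a},\epsilon_{\mathrm r}$ are tolerances, $\mathbb B$ is the closed Euclidean unit ball. A commutation $\delta$ is $\epsilon$-suboptimal at $\theta$ if $V^*_\delta(\theta)-V^*(\theta)\le\max\{\epsilon_{\mathrm a},\epsilon_{\mathrm r}V^*(\theta)\}$, and in a set if at each of its points. $\Delta=\{\delta:\Theta^*_\delta\cap\Theta\ne\emptyset\}$.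 Overlap $\gamma$: the largest $\gamma\ge0$ such that for every $\theta\in\Theta$ some $\delta\in\Delta$ is $\epsilon$-suboptimal in $(\gamma\mathbb B+\theta)\cap\Theta$. Variability $\sigma_\delta$ of $\delta\in\Delta$: the largest $\sigma>0$ such that for every $\theta_o\in\Theta^*_\delta$, with $\Theta_\sigma=(\sigma\mathbb B+\theta_o)\cap\Theta^*_\delta$, one has $\max_{\Theta_\sigma}V^*_\delta-\min_{\Theta_\sigma}V^*_\delta<\max\{\epsilon_{\mathrm a},\epsilon_{\mathrm r}\min_{\Theta_\sigma}V^*\}$. Condition number $\psi=\min\{\gamma,\min_{\delta\in\Delta}\sigma_\delta\}$. For a simplex $\mathcal R$ with vertices $v_i$ and a commutation $\delta$, $\bar V_\delta(\theta)=\sum_i\alpha_iV^*_\delta(v_i)$ for barycentric coordinates $\alpha$ of $\theta\in\mathcal R$. Let $\mathcal P$ be the set of pairs $(\theta,\delta')$, $\theta\in\mathcal R$, $\delta'\ne\delta$, $\theta\in\Theta^*_{\delta'}$; $\bar e_{\mathrm a}(\mathcal R)=\sup_{\mathcal P}(\bar V_\delta(\theta)-V^*_{\delta'}(\theta))$, $\mu=\min_{\mathcal P}V^*_{\delta'}(\theta)$, $\bar e_{\mathrm r}(\mathcal R)=\bar e_{\mathrm a}(\mathcal R)/\mu$. Problem $D^{\mathcal R}_\delta$: maximize $\epsilon$ over $\theta\in\mathcal R$, $\epsilon\in\mathbb R$, $\delta'\in\{\delta''\ne\delta:\mathcal R\subseteq\Theta^*_{\delta''}\}$, subject to $\bar V_\delta(\theta)-\epsilon\ge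 V^*_{\delta'}(\theta)$ and $\epsilon\ge\max\{\epsilon_{\mathrm a},\epsilon_{\mathrm r}\mu\}$; $\delta^*$ is the $\delta'$-component of a maximizer. SPLIT$(\mathcal R)$: pick vertices $\bar v,\bar v'$ of $\mathcal R$ at maximal distance, $v_{\mathrm{mid}}=(\bar v+\bar v')/2$, return $\mathcal S_1=\mathrm{co}((\mathcal V(\mathcal R)\setminus\{\bar v\})\cup\{v_{\mathrm{mid}}\})$, $\mathcal S_2=\mathrm{co}((\mathcal V(\mathcal R)\setminus\{\bar v'\})\cup\{v_{\mathrm{mid}}\})$. Algorithm 1 (all subproblems solved exactly): Input is a finite binary tree whose leaves $(\mathcal R_i,\delta_i)$ are $p$-simplices with $\mathcal R_i\subseteq\Theta^*_{\delta_i}$ and $\bigcup_i\mathcal R_i=\Theta$; all leaves marked open. While an open leaf exists: take the most recently created open leaf $(\mathcal R,\delta)$ (one iteration). If $\mathcal P=\emptyset$, or $\bar e_{\mathrm a}(\mathcal R)\le\epsilon_{\mathrm a}$, or $\bar e_{\mathrm r}(\mathcal R)\le\epsilon_{\mathrm r}$: close the leaf. Otherwise solve $D^{\mathcal R}_\delta$. If feasible: if $\max_{\mathcal R}V^*_\delta-\min_{\mathcal R}V^*_\delta<\max\{\epsilon_{\mathrm a},\epsilon_{\mathrm r}\min_{\mathcal R}V^*\}$, replace the open leaf by $(\mathcal R,\delta^* )$; else add open children $(\mathcal S_1,\delta^* ),(\mathcal S_2,\delta^* )$ from SPLIT$(\mathcal R)$. If infeasible, add open children $(\mathcal S_1,\delta),(\mathcal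 S_2,\delta)$. *)

(* Defs.v *)
From HB Require Import structures.
From mathcomp Require Import all_boot all_order all_algebra.
From mathcomp Require Import all_classical all_reals all_analysis.

Set Implicit Arguments.
Unset Strict Implicit.
Unset Printing Implicit Defensive.

Import Order.TTheory GRing.Theory Num.Theory.
Local Open Scope classical_set_scope.
Local Open Scope ring_scope.

(* Euclidean norm (the analysis library's norm on 'rV is the max-norm) *)
Definition enorm (R : realType) (k : nat) (x : 'rV[R]_k) : R :=
  Num.sqrt (\sum_(i < k) x ord0 i ^+ 2).

Definition cball (R : realType) (k : nat) (c : 'rV[R]_k) (r : R) : set 'rV[R]_k :=
  [set x | enorm (x - c) <= r].

(* closed ball  r B + c  with an extended-real radius r (r = +oo gives R^k) *)
Definition ecball (R : realType) (k : nat) (c : 'rV[R]_k) (r : \bar R) : set 'rV[R]_k :=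
  [set x | ((enorm (x - c))%:E <= r)%E].

Definition conv_fam (R : realType) (k N : nat) (w : 'I_N -> 'rV[R]_k) : set 'rV[R]_k :=
  [set x | exists a : 'I_N -> R, (forall i, 0 <= a i) /\ \sum_(i < N) a i = 1 /\
                                  x = \sum_(i < N) a i *: w i].

Definition full_dim_polytope (R : realType) (k : nat) (T : set 'rV[R]_k) : Prop :=
  (exists (N : nat) (w : 'I_N -> 'rV[R]_k), T = conv_fam w) /\
  (exists c (r : R), 0 < r /\ cball c r `<=` T).

Definition convex_cone (R : realType) (k : nat) (K : set 'rV[R]_k) : Prop :=
  forall x y (a b : R), K x -> K y -> 0 <= a -> 0 <= b -> K (a *: x + b *: y).

Definition jointly_convex (R : realType) (p n : nat) (F : 'rV[R]_p -> 'rV[R]_n -> R) :=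
  forall th1 x1 th2 x2 (t : R), 0 <= t <= 1 ->
    F (t *: th1 + (1 - t) *: th2) (t *: x1 + (1 - t) *: x2) <=
    t * F th1 x1 + (1 - t) * F th2 x2.

Definition jointly_affine (R : realType) (p n k : nat)
  (F : 'rV[R]_p -> 'rV[R]_n -> 'rV[R]_k) :=
  forall th1 x1 th2 x2 (t : R),
    F (t *: th1 + (1 - t) *: th2) (t *: x1 + (1 - t) *: x2) =
    t *: F th1 x1 + (1 - t) *: F th2 x2.

Definition comm (m : nat) := {ffun 'I_m -> bool}.

Definition bin (R : realType) (m : nat) (dl : comm m) : 'rV[R]_m :=
  \row_(i < m) (dl i)%:R.

Record data (R : realType) (p n m d l : nat) := Data {
  pf : 'rV[R]_p -> 'rV[R]_n -> 'rV[R]_m -> R;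
  pg : 'rV[R]_p -> 'rV[R]_n -> 'rV[R]_m -> 'rV[R]_l;
  ph : 'rV[R]_p -> 'rV[R]_n -> 'rV[R]_m -> 'rV[R]_d;
  pK : set 'rV[R]_d;
  eps_a : R;
  eps_r : R;
  Theta : set 'rV[R]_p
}.

Section Problem.
Context {R : realType} {p n m d l : nat} (D : data R p n m d l).

Definition feas (dl : comm m) (th : 'rV[R]_p) : set 'rV[R]_n :=
  [set x | pg D th x (bin R dl) = 0 /\ pK D (ph D th x (bin R dl))].

(* V*_delta(theta) : optimal value (+oo if infeasible) *)
Definition Vstar (dl : comm m) (th : 'rV[R]_p) : \bar R :=
  ereal_inf [set (pf D th x (bin R dl))%:E | x in feas dl th].

Definition Thstar (dl : comm m) : set 'rV[R]_p :=
  [set th | exists x, feas dl th x].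

Definition Vmin (th : 'rV[R]_p) : \bar R :=
  \big[Order.min/+oo%E]_(dl : comm m) Vstar dl th.

Definition ThstarU : set 'rV[R]_p := [set th | exists dl, Thstar dl th].

Definition subopt (dl : comm m) (th : 'rV[R]_p) : Prop :=
  (Vstar dl th - Vmin th <= Order.max (eps_a D)%:E ((eps_r D)%:E * Vmin th))%E.

Definition subopt_on (dl : comm m) (S : set 'rV[R]_p) : Prop :=
  forall th, S th -> subopt dl th.

Definition Delta (dl : comm m) : Prop := Thstar dl `&` Theta D !=set0.

Definition overlap_prop (g : R) : Prop :=
  forall th, Theta D th ->
    exists dl, Delta dl /\ subopt_on dl (cball th g `&` Theta D).

Definition overlap : \bar R :=
  ereal_sup [set g%:E | g in [set g : R | 0 <= g /\ overlap_prop g]].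

Definition variability_prop (dl : comm m) (s : R) : Prop :=
  forall tho, Thstar dl tho ->
    let S := cball tho s `&` Thstar dl in
    (ereal_sup (Vstar dl @` S) - ereal_inf (Vstar dl @` S) <
       Order.max (eps_a D)%:E ((eps_r D)%:E * ereal_inf (Vmin @` S)))%E.

Definition variability (dl : comm m) : \bar R :=
  ereal_sup [set s%:E | s in [set s : R | 0 < s /\ variability_prop dl s]].

Definition psi : \bar R :=
  Order.min overlap (\big[Order.min/+oo%E]_(dl : comm m | `[< Delta dl >]) variability dl).

Definition vert := {ffun 'I_p.+1 -> 'rV[R]_p}.
Definition bvec := {ffun 'I_p.+1 -> R}.

Definition bary (V : vert) (th : 'rV[R]_p) (a : bvec) : Prop :=
  (forall i, 0 <= a i) /\ \sum_(i < p.+1) a i = 1 /\ th = \sum_(i < p.+1) a i *: V i.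

Definition simp (V : vert) : set 'rV[R]_p := [set th | exists a, bary V th a].

Definition aff_indep (V : vert) : Prop :=
  forall b : 'I_p.+1 -> R, \sum_(i < p.+1) b i = 0 ->
    \sum_(i < p.+1) b i *: V i = 0 -> forall i, b i = 0.

(* the barycentric coordinates of th (unique for a p-simplex) *)
Definition bcoord (V : vert) (th : 'rV[R]_p) : bvec := xget [ffun=> 0] (bary V th).

Definition Vbar (dl : comm m) (V : vert) (th : 'rV[R]_p) : \bar R :=
  (\sum_(i < p.+1) (bcoord V th i)%:E * Vstar dl (V i))%E.

Definition Pset (V : vert) (dl : comm m) : set ('rV[R]_p * comm m) :=
  [set q | simp V q.1 /\ q.2 != dl /\ Thstar q.2 q.1].

Definition ea (V : vert) (dl : comm m) : \bar R :=
  ereal_sup [set (Vbar dl V q.1 - Vstar q.2 q.1)%E | q in Pset V dl].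

Definition mu (V : vert) (dl : comm m) : \bar R :=
  ereal_inf [set Vstar q.2 q.1 | q in Pset V dl].

Definition er (V : vert) (dl : comm m) : \bar R :=
  (ea V dl * ((fine (mu V dl))^-1)%:E)%E.

Definition close_cond (V : vert) (dl : comm m) : Prop :=
  Pset V dl = set0 \/ (ea V dl <= (eps_a D)%:E)%E \/ (er V dl <= (eps_r D)%:E)%E.

Definition Dfeas (V : vert) (dl : comm m) (th : 'rV[R]_p) (e : R) (dl' : comm m) : Prop :=
  simp V th /\ dl' != dl /\ simp V `<=` Thstar dl' /\
  (Vstar dl' th <= Vbar dl V th - e%:E)%E /\
  (Order.max (eps_a D)%:E ((eps_r D)%:E * mu V dl) <= e%:E)%E.

Definition Dmaxcomp (V : vert) (dl dl' : comm m) : Prop :=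
  exists th e, Dfeas V dl th e dl' /\
    forall th2 e2 dl2, Dfeas V dl th2 e2 dl2 -> e2 <= e.

Definition small_var (V : vert) (dl : comm m) : Prop :=
  (ereal_sup (Vstar dl @` simp V) - ereal_inf (Vstar dl @` simp V) <
     Order.max (eps_a D)%:E ((eps_r D)%:E * ereal_inf (Vmin @` simp V)))%E.

Definition maxpair (V : vert) (i j : 'I_p.+1) : Prop :=
  forall a b, enorm (V a - V b) <= enorm (V i - V j).

Definition vmid (V : vert) (i j : 'I_p.+1) : 'rV[R]_p := 2^-1 *: (V i + V j).

Definition split1 (V : vert) (i j : 'I_p.+1) : vert :=
  [ffun k => if k == i then vmid V i j else V k].
Definition split2 (V : vert) (i j : 'I_p.+1) : vert :=
  [ffun k => if k == j then vmid V i j else V k].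

(* leaves; the open leaves are kept as a stack, most recently created first *)
Definition leaf := (vert * comm m)%type.

Definition split_push (V : vert) (dl : comm m) (rest s' : seq leaf) : Prop :=
  exists i j, maxpair V i j /\ s' = (split2 V i j, dl) :: (split1 V i j, dl) :: rest.

Definition step (s s' : seq leaf) : Prop :=
  match s with
  | [::] => False
  | (V, dl) :: rest =>
      (close_cond V dl /\ s' = rest) \/
      (~ close_cond V dl /\ exists dls, Dmaxcomp V dl dls /\
          ((small_var V dl /\ s' = (V, dls) :: rest) \/
           (~ small_var V dl /\ split_push V dls rest s'))) \/
      (~ close_cond V dl /\ ~ (exists th e dl', Dfeas V dl th e dl') /\
          split_push V dl rest s')
  end.

Definition valid_input (L : seq leaf) : Prop :=
  (forall lf, lf \in L -> aff_indep lf.1 /\ simp lf.1 `<=` Thstar lf.2) /\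
  (forall th, Theta D th <-> exists2 lf, lf \in L & simp lf.1 th).

End Problem.

(* Main.v *)
Require Import Defs.
From HB Require Import structures.
From mathcomp Require Import all_boot all_order all_algebra.
From mathcomp Require Import all_classical all_reals all_analysis.
From mathcomp Require Import ring lra zify.
Import Order.TTheory GRing.Theory Num.Theory.
Local Open Scope classical_set_scope.
Local Open Scope ring_scope.
Set Implicit Arguments. Unset Strict Implicit.
Section Geo.
Context {R : realType} {p : nat}.
Implicit Types (V W : @vert R p) (x y : 'rV[R]_p).

Definition sqn x : R := \sum_(i < p) x ord0 i ^+ 2.

Lemma sqn_ge0 x : 0 <= sqn x.
Proof. by apply: sumr_ge0 => i _; rewrite sqr_ge0. Qed.

Lemma sqnN x : sqn (- x) = sqn x.
Proof. by apply: eq_bigr => i _; rewrite mxE sqrrN. Qed.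

Lemma sqnB x y : sqn (x - y) = sqn (y - x).
Proof. by rewrite -sqnN opprB. Qed.

Lemma enorm_le x y : enorm x <= enorm y -> sqn x <= sqn y.
Proof. by rewrite /enorm ler_sqrt // sqn_ge0. Qed.

Lemma sqn_mid V i j b : sqn (vmid V i j - V b) =
  (sqn (V i - V b) + sqn (V j - V b)) / 2 - sqn (V i - V j) / 4.
Proof.
rewrite /sqn.
transitivity (\sum_(k < p) (((V i - V b) ord0 k ^+2 + (V j - V b) ord0 k ^+2)/2
   - (V i - V j) ord0 k ^+2 / 4)).
  by apply: eq_bigr => k _; rewrite !mxE; field.
by rewrite sumrB -!mulr_suml big_split.
Qed.

Definition maxsq V : R :=
  \big[Num.max/0]_(q : 'I_p.+1 * 'I_p.+1) sqn (V q.1 - V q.2).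

Lemma maxsq_ge V a b : sqn (V a - V b) <= maxsq V.
Proof. exact: (le_bigmax _ (fun q : 'I_p.+1 * 'I_p.+1 => sqn (V q.1 - V q.2)) (a, b)). Qed.

Lemma maxsq_ge0 V : 0 <= maxsq V.
Proof. exact: le_trans (sqn_ge0 _) (maxsq_ge V ord0 ord0). Qed.

Lemma maxsq_le V c : 0 <= c -> (forall a b, sqn (V a - V b) <= c) -> maxsq V <= c.
Proof. by move=> c0 H; apply: bigmax_le => // q _; apply: H. Qed.

Lemma maxpairE V i j : maxpair V i j -> sqn (V i - V j) = maxsq V.
Proof.
move=> H; apply/eqP; rewrite eq_le maxsq_ge /=.
by apply: maxsq_le; [exact: sqn_ge0| move=> a b; apply: enorm_le].
Qed.

Definition repl V (r : 'I_p.+1) (z : 'rV[R]_p) : vert := [ffun k => if k == r then z else V k].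

Lemma child_bound V i j r a b : maxpair V i j ->
  (a == r) || (b == r) ->
  sqn (repl V r (vmid V i j) a - repl V r (vmid V i j) b) <= 3/4 * maxsq V.
Proof.
move=> Hm Hab; have M0 := maxsq_ge0 V.
have Hmid : forall c, sqn (vmid V i j - V c) <= 3/4 * maxsq V.
  move=> c; rewrite sqn_mid (maxpairE Hm).
  have := maxsq_ge V i c; have := maxsq_ge V j c; lra.
rewrite !ffunE; case: ifP => Ha; case: ifP => Hb.
- by rewrite subrr /sqn big1 ?mulr_ge0 // => k _; rewrite mxE expr0n.
- exact: Hmid.
- by rewrite sqnB.
- by rewrite Ha Hb in Hab.
Qed.

Lemma child_same V r z a : a != r -> repl V r z a = V a.
Proof. by rewrite ffunE => /negbTE ->. Qed.

Lemma maxsq_child V i j r : maxpair V i j -> maxsq (repl V r (vmid V i j)) <= maxsq V.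
Proof.
move=> Hm; apply: maxsq_le; first exact: maxsq_ge0.
move=> a b; case: (boolP ((a == r) || (b == r))) => H.
  apply: le_trans (child_bound Hm H) _; have := maxsq_ge0 V; lra.
move: H; rewrite negb_or => /andP[ar br].
by rewrite !child_same // maxsq_ge.
Qed.

Definition cnt (c : R) V : nat :=
  #|finset (fun q : 'I_p.+1 * 'I_p.+1 => c < sqn (V q.1 - V q.2))|.

Lemma cnt_le c V : (cnt c V <= p.+1 * p.+1)%N.
Proof. by have := max_card (finset (fun q : 'I_p.+1 * 'I_p.+1 => c < sqn (V q.1 - V q.2))); rewrite card_prod card_ord. Qed.

Lemma cnt_child V i j r c : maxpair V i j -> (r == i) || (r == j) ->
  3/4 * maxsq V <= c -> c < maxsq V -> (cnt c (repl V r (vmid V i j)) < cnt c V)%N.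
Proof.
move=> Hm Hr Hc1 Hc2; apply: proper_card; apply/properP; split.
  apply/fintype.subsetP => q; rewrite !inE => Hq.
  case: (boolP ((q.1 == r) || (q.2 == r))) => H.
    by have := child_bound Hm H; lra.
  move: H; rewrite negb_or => /andP[ar br].
  by move: Hq; rewrite !child_same.
exists (i, j); rewrite !inE /= ?(maxpairE Hm) //.
rewrite -leNgt; apply: le_trans (child_bound Hm _) Hc1.
by case/orP: Hr => /eqP ->; rewrite eqxx ?orbT.
Qed.
End Geo.
Section Simp.
Context {R : realType} {p : nat}.
Implicit Types (V W : @vert R p) (x y : 'rV[R]_p).

Lemma simp_vert V k : simp V (V k).
Proof.
exists [ffun i => (i == k)%:R]; split; [|split].
- by move=> i; rewrite ffunE ler0n.
- rewrite (bigD1 k) //= big1 ?ffunE ?eqxx ?addr0 // => i /negbTE.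
  by rewrite ffunE => ->.
- rewrite (bigD1 k) //= big1 ?ffunE ?eqxx ?addr0 ?scale1r // => i /negbTE.
  by rewrite ffunE => ->; rewrite scale0r.
Qed.

Lemma simp_convex V x y t : simp V x -> simp V y -> 0 <= t <= 1 ->
  simp V (t *: x + (1 - t) *: y).
Proof.
move=> [a [a0 [a1 ->]]] [b [b0 [b1 ->]]] /andP[t0 t1].
exists [ffun i => t * a i + (1 - t) * b i]; split; [|split].
- move=> i; have := a0 i; have := b0 i; rewrite ffunE => h1 h2.
  by rewrite addr_ge0 // mulr_ge0 // subr_ge0.
- rewrite (eq_bigr (fun i => t * a i + (1 - t) * b i)); last by move=> i _; rewrite ffunE.
  by rewrite big_split /= -!mulr_sumr a1 b1; ring.
- rewrite [RHS](eq_bigr (fun i => t *: (a i *: V i) + (1 - t) *: (b i *: V i))).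
    by rewrite big_split /= -!scaler_sumr.
  by move=> i _; rewrite ffunE !scalerA scalerDl.
Qed.

Lemma simp_mid V i j : simp V (vmid V i j).
Proof.
have -> : vmid V i j = 2^-1 *: V i + (1 - 2^-1) *: V j.
  rewrite /vmid scalerDr; congr (_ + _); congr (_ *: _).
  have : (2 : R) != 0 by rewrite pnatr_eq0.
  by move=> H; field.
apply: simp_convex; try exact: simp_vert.
by rewrite invr_ge0 ler0n /= invf_le1 ?ler1n // ltr0n.
Qed.

Lemma simp_sub V W : (forall k, simp V (W k)) -> simp W `<=` simp V.
Proof.
move=> H x [b [b0 [b1 ->]]].
have [c Hc] := choice H.
exists [ffun i => \sum_(k < p.+1) b k * c k i]; split; [|split].
- move=> i; rewrite ffunE; apply: sumr_ge0 => k _; apply: mulr_ge0; first exact: b0.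
  by have [+ _] := Hc k; apply.
- rewrite (eq_bigr (fun i => \sum_(k < p.+1) b k * c k i)); last by move=> i _; rewrite ffunE.
  rewrite exchange_big /= -b1; apply: eq_bigr => k _.
  by rewrite -mulr_sumr; have [_ [-> _]] := Hc k; rewrite mulr1.
- rewrite [RHS](eq_bigr (fun i => \sum_(k < p.+1) b k *: (c k i *: V i))); last first.
    by move=> i _; rewrite ffunE scaler_suml; apply: eq_bigr => k _; rewrite scalerA.
  rewrite exchange_big /=; apply: eq_bigr => k _.
  by rewrite -scaler_sumr; have [_ [_ <-]] := Hc k.
Qed.

Lemma simp_child V i j r : simp (repl V r (vmid V i j)) `<=` simp V.
Proof.
apply: simp_sub => k; rewrite ffunE; case: ifP => _; [exact: simp_mid | exact: simp_vert].
Qed.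

Lemma split1E V i j : Defs.split1 V i j = repl V i (vmid V i j). Proof. by []. Qed.
Lemma split2E V i j : Defs.split2 V i j = repl V j (vmid V i j). Proof. by []. Qed.
End Simp.

Lemma pow43 {R : realType} n : 1 + n%:R / 3 <= (4/3 : R) ^+ n.
Proof.
elim: n => [|n IH]; first by rewrite expr0 mul0r addr0.
rewrite exprS -natr1.
have : 0 <= n%:R :> R by rewrite ler0n.
nra.
Qed.

Section Level.
Context {R : realType} {p : nat} (eps : R) (heps : 0 < eps).
Implicit Types (V W : @vert R p).

Lemma lev_ex V : exists g, maxsq V <= eps * (4/3) ^+ g.
Proof.
have h0 : 0 <= 3 * maxsq V / eps by rewrite divr_ge0 ?mulr_ge0 ?maxsq_ge0 // ltW.
have := archi_boundP h0; set n := Num.Def.archi_bound _ => Hn.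
exists n; have := pow43 (R := R) n => h2.
have e : maxsq V = eps * ((3 * maxsq V / eps) / 3).
  have : eps != 0 by rewrite gt_eqF.
  by move=> ?; field.
rewrite e; apply: ler_wpM2l; first exact: ltW.
set z := 3 * maxsq V / eps in Hn *; lra.
Qed.

Definition lev V : nat := ex_minn (lev_ex V).

Lemma lev_spec V : maxsq V <= eps * (4/3) ^+ lev V.
Proof. by rewrite /lev; case: ex_minnP. Qed.

Lemma lev_min V g : maxsq V <= eps * (4/3) ^+ g -> (lev V <= g)%N.
Proof. by rewrite /lev; case: ex_minnP => g0 _ H /H. Qed.

Definition Ameas V : nat :=
  (lev V * (p.+1 * p.+1).+1 + cnt (eps * (4/3) ^+ (lev V).-1) V)%N.

Lemma A_child V i j r : eps < maxsq V -> maxpair V i j -> (r == i) || (r == j) ->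
  (Ameas (repl V r (vmid V i j)) < Ameas V)%N.
Proof.
move=> HV Hm Hr; set W := repl V r (vmid V i j).
have hWV := maxsq_child r Hm.
have hl : (lev W <= lev V)%N.
  by apply: lev_min; apply: le_trans hWV (lev_spec V).
rewrite /Ameas; case: (ltnP (lev W) (lev V)) => h.
  have := cnt_le (eps * (4 / 3) ^+ (lev W).-1) W.
  set P := (p.+1 * p.+1)%N; move=> hc.
  have h' : ((lev W).+1 * P.+1 <= lev V * P.+1)%N by rewrite leq_mul2r h orbT.
  move: h' hc; set a := (lev W * P.+1)%N; set b := (lev V * P.+1)%N.
  rewrite mulSn -/a; lia.
have eq : lev W = lev V by apply/eqP; rewrite eqn_leq hl h.
rewrite eq ltn_add2l.
have g0 : lev V <> 0%N.
  move=> e; have := lev_spec V; rewrite e expr0 mulr1; lra.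
set g := lev V in g0 *; have hgS : g = (g.-1).+1 by case: g g0 {eq h hl} => // *.
apply: (cnt_child Hm Hr).
  have := lev_spec V; rewrite -/g {1}hgS exprS.
  have : 0 <= maxsq V by exact: maxsq_ge0.
  set z := eps * (4/3) ^+ g.-1; rewrite mulrCA -/z; lra.
rewrite ltNge; apply/negP => /lev_min; rewrite -/g.
by case: g g0 {eq h hl hgS} => // n _; rewrite ltnn.
Qed.
End Level.
Section Ball.
Context {R : realType} {p : nat}.
Implicit Types (V : @vert R p).

Lemma coord_sq V i k : (V i ord0 k - V ord0 ord0 k) ^+ 2 <= sqn (V i - V ord0).
Proof.
rewrite /sqn (bigD1 k) //= !mxE -[X in X <= _]addr0 lerD2l; apply: sumr_ge0 => j _; exact: sqr_ge0.
Qed.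

Lemma small_ball V (e : R) x : 0 <= e -> maxsq V <= e -> simp V x ->
  sqn (x - V ord0) <= p%:R * e.
Proof.
move=> e0 hM [a [a0 [a1 ->]]].
have -> : p%:R * e = \sum_(k < p) e by rewrite sumr_const card_ord mulr_natl.
apply: ler_sum => k _.
rewrite !mxE summxE.
have -> : \sum_(i < p.+1) (a i *: V i) ord0 k - V ord0 ord0 k =
          \sum_(i < p.+1) a i * (V i ord0 k - V ord0 ord0 k).
  rewrite (eq_bigr (fun i => a i * V i ord0 k)); last by move=> i _; rewrite mxE.
  under [RHS]eq_bigr do rewrite mulrBr.
  by rewrite sumrB -mulr_suml a1 mul1r.
set s := \sum_(i < p.+1) _.
have hs : `|s| <= Num.sqrt e.
  apply: le_trans (ler_norm_sum _ _ _) _.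
  have -> : Num.sqrt e = \sum_(i < p.+1) a i * Num.sqrt e by rewrite -mulr_suml a1 mul1r.
  apply: ler_sum => i _; rewrite normrM ger0_norm; last exact: a0.
  apply: ler_wpM2l; first exact: a0.
  rewrite -sqrtr_sqr ler_sqrt //; apply: le_trans (coord_sq V i k) _.
  exact: le_trans (maxsq_ge V i ord0) hM.
have h1 := sqr_sqrtr e0.
have h2 : 0 <= `|s| by [].
rewrite -(real_normK (num_real s)).
set t := Num.sqrt e in hs h1 *; set u := `|s| in hs h2 *.
nra.
Qed.
End Ball.

Lemma eps_exists {R : realType} {p : nat} (r : \bar R) : (0 < p)%N -> (0 < r)%E ->
  exists2 e : R, 0 < e & forall V : @vert R p, maxsq V <= e ->
     simp V `<=` ecball (V ord0) r.
Proof.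
move=> hp; case: r => [r| |] //= hr; last first.
  by exists 1 => // V _ x _; rewrite /ecball /= leey.
rewrite lte_fin in hr.
have hp' : (0 : R) < p%:R by rewrite ltr0n.
exists (r ^+ 2 / p%:R); first by rewrite divr_gt0 // exprn_gt0.
move=> V hM x hx; rewrite /ecball /= lee_fin /enorm.
have := small_ball (ltW (divr_gt0 (exprn_gt0 2 hr) hp')) hM hx.
rewrite mulrC divfK ?gt_eqF // => h.
by rewrite -(ger0_norm (ltW hr)) -sqrtr_sqr ler_sqrt // sqr_ge0.
Qed.

Lemma psi_pos {R : realType} {p n m d l : nat} (D : data R p n m d l) :
  (0 < overlap D)%E -> (forall dl : comm m, Delta D dl -> (0 < variability D dl)%E) ->
  (0 < psi D)%E.
Proof.
move=> h1 h2; rewrite /psi lt_min h1 /=.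
apply: (big_ind (fun x => 0 < x)%E) => //.
- by move=> x y hx hy; rewrite lt_min hx hy.
- by move=> i /asboolP; apply: h2.
Qed.
Section Repl.
Context {R : realType} {p n m d l : nat} (D : data R p n m d l).
Hypothesis HV : forall (dl : comm m) th, Vstar D dl th != -oo%E.
Hypothesis Her : 0 < eps_r D.
Implicit Types (V : @vert R p).

Lemma Vstar_fin dl th : Thstar D dl th -> Vstar D dl th \is a fin_num.
Proof.
move=> [x hx].
have h : (Vstar D dl th < +oo)%E.
  by apply: le_lt_trans (ereal_inf_lbound _) (ltry (pf D th x (bin R dl))); exists x.
by rewrite fin_numE HV /= lt_eqF.
Qed.

Lemma Vbar_le V dl th s : simp V `<=` Thstar D dl -> simp V th ->
  (forall i, Vstar D dl (V i) <= s%:E)%E -> (Vbar D dl V th <= s%:E)%E.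
Proof.
move=> hsub hth hs.
have [a0 [a1 _]] : bary V th (bcoord V th) := xgetPex _ hth.
have Hr i : Vstar D dl (V i) = (fine (Vstar D dl (V i)))%:E.
  by rewrite fineK //; apply: Vstar_fin; apply: hsub; apply: simp_vert.
rewrite /Vbar.
under eq_bigr do rewrite Hr -EFinM.
rewrite sumEFin lee_fin.
have -> : s = \sum_(i < p.+1) bcoord V th i * s by rewrite -mulr_suml a1 mul1r.
apply: ler_sum => i _; apply: ler_wpM2l; first exact: a0.
by rewrite -lee_fin -Hr.
Qed.

Lemma infVmin_le_mu V dl : (ereal_inf (Vmin D @` simp V) <= mu D V dl)%E.
Proof.
apply: le_ereal_inf_tmp => _ [q [hq _] <-].
apply: (@le_trans _ _ (Vmin D q.1)); first by apply: ereal_inf_lbound; exists q.1.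
exact: bigmin_le.
Qed.

Lemma repl_dec V dl dls : simp V `<=` Thstar D dl -> Dmaxcomp D V dl dls ->
  small_var D V dl ->
  (ereal_inf (Vstar D dls @` simp V) < ereal_inf (Vstar D dl @` simp V))%E.
Proof.
move=> hsub [th [e [[hth [_ [hsubs [hle htol]]]] _]]] hsv.
set S := Vstar D dl @` simp V.
have hv0 := Vstar_fin (hsub _ (simp_vert V ord0)).
have hS : S (Vstar D dl (V ord0)) by exists (V ord0) => //; exact: simp_vert.
have hinf := ereal_inf_lbound hS.
have hsup := ereal_sup_ubound hS.
have htol' : (Order.max (eps_a D)%:E ((eps_r D)%:E * ereal_inf (Vmin D @` simp V)) <= e%:E)%E.
  move: htol; rewrite !ge_max => /andP[h1 h2]; rewrite h1 /=.
  apply: le_trans h2; apply: lee_wpmul2l; first by rewrite lee_fin ltW.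
  exact: infVmin_le_mu.
have hw := Vstar_fin (hsubs th hth).
have hbar : forall s, ereal_sup S = s%:E -> (Vbar D dl V th <= s%:E)%E.
  move=> s hs; apply: Vbar_le => // i; rewrite -hs; apply: ereal_sup_ubound.
  by exists (V i) => //; exact: simp_vert.
have hlb : (ereal_inf (Vstar D dls @` simp V) <= Vstar D dls th)%E.
  by apply: ereal_inf_lbound; exists th.
move: hsv hinf hsup htol' hbar; rewrite /small_var -/S.
rewrite -(fineK hv0).
move: hle hlb; rewrite -(fineK hw).
set w := fine _; set r0 := fine _.
set T := Order.max _ _.
case: (ereal_sup S) => [s| |]; case: (ereal_inf S) => [t| |] //=;
 case: (Vbar D dl V th) => [b| |] //= h1 h2 h3 h4 h5 h6 h7;
 try (by have := lt_le_trans h3 h6); try (by have := h7 _ erefl).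
have := lt_le_trans h3 h6; rewrite lte_fin => hst.
have := h7 _ erefl; rewrite lee_fin => hb.
move: h1; rewrite lee_fin => h1.
apply: le_lt_trans h2 _; rewrite lte_fin; lra.
Qed.
End Repl.
Section Run.
Context {R : realType} {p n m d l : nat} (D : data R p n m d l).
Hypothesis HV : forall (dl : comm m) th, Vstar D dl th != -oo%E.
Hypothesis Her : 0 < eps_r D.
Context (eps : R) (heps : 0 < eps).
Implicit Types (V : @vert R p).

Definition Inv (lf : @leaf R p m) : Prop :=
  simp lf.1 `<=` Theta D /\ simp lf.1 `<=` Thstar D lf.2.

Definition infv V (dl : comm m) : \bar R := ereal_inf (Vstar D dl @` simp V).

Definition rank V (dl : comm m) : nat :=
  #|finset (fun dl' : comm m => (infv V dl' < infv V dl)%E)|.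

Lemma rank_le V dl : (rank V dl <= #|{: comm m}|)%N.
Proof. exact: max_card. Qed.

Lemma rank_dec V dl dls : (infv V dls < infv V dl)%E -> (rank V dls < rank V dl)%N.
Proof.
move=> h; apply: proper_card; apply/properP; split.
  by apply/fintype.subsetP => q; rewrite !inE => hq; apply: lt_trans hq h.
by exists dls; rewrite !inE ?h // ltxx.
Qed.

Definition mus (lf : @leaf R p m) : nat :=
  (Ameas heps lf.1 * (#|{: comm m}|).+1 + rank lf.1 lf.2)%N.

Definition Phi (s : seq (@leaf R p m)) : nat := \sum_(lf <- s) 3 ^ mus lf.

Lemma mus_child V i j r dl dl' : eps < maxsq V -> maxpair V i j -> (r == i) || (r == j) ->
  (mus (repl V r (vmid V i j), dl') < mus (V, dl))%N.
Proof.
move=> h1 h2 h3; have := A_child heps h1 h2 h3; rewrite /mus /=.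
have := rank_le (repl V r (vmid V i j)) dl'.
set K := #|{: comm m}|; set a := Ameas heps _; set b := Ameas heps _.
set x := rank _ _; set y := rank _ _ => hx hab.
have : (a.+1 * K.+1 <= b * K.+1)%N by rewrite leq_mul2r hab orbT.
rewrite mulSn; lia.
Qed.

Lemma mus_repl V dl dls : (infv V dls < infv V dl)%E -> (mus (V, dls) < mus (V, dl))%N.
Proof. by move=> h; rewrite /mus /= ltn_add2l rank_dec. Qed.

Lemma step_inv s s' : step D s s' -> (forall lf, lf \in s -> Inv lf) ->
  forall lf, lf \in s' -> Inv lf.
Proof.
case: s => [//|[V dl] rest] /= hst hI.
have [hT hS] : Inv (V, dl) by apply: hI; rewrite mem_head.
have hR : forall lf, lf \in rest -> Inv lf by move=> lf hl; apply: hI; rewrite in_cons hl orbT.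
have hsplit : forall dl0, simp V `<=` Thstar D dl0 -> split_push V dl0 rest s' ->
    forall lf, lf \in s' -> Inv lf.
  move=> dl0 h0 [i [j [_ ->]]] lf; rewrite !in_cons => /orP[/eqP ->|/orP[/eqP ->|]] //.
  - split => x /simp_child hx; [exact: hT | exact: h0].
  - split => x /simp_child hx; [exact: hT | exact: h0].
  exact: hR.
case: hst => [[_ ->] //|[[_ [dls [[th [e [[_ [_ [hsubs _]]] _]] hsw]]]]|[_ [_ hsp]]]].
- case: hsw => [[_ ->]|[_ hsp]].
    move=> lf; rewrite in_cons => /orP[/eqP ->|]; last exact: hR.
    by split.
  exact: hsplit hsp.
- exact: hsplit hS hsp.
Qed.

Lemma pow3_two a b c : (a < c)%N -> (b < c)%N -> (3 ^ a + 3 ^ b < 3 ^ c)%N.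
Proof.
case: c => // c; rewrite !ltnS => ha hb; rewrite expnS.
have := leq_pexp2l (isT : (0 < 3)%N) ha; have := leq_pexp2l (isT : (0 < 3)%N) hb.
have : (0 < 3 ^ c)%N by rewrite expn_gt0.
lia.
Qed.

Lemma step_phi s s' : step D s s' -> (forall lf, lf \in s -> Inv lf) ->
  (forall V dl rest, s = (V, dl) :: rest -> eps < maxsq V) -> (Phi s' < Phi s)%N.
Proof.
case: s => [//|[V dl] rest] /= hst hI hbig.
have hV := hbig V dl rest erefl.
have [hT hS] : Inv (V, dl) by apply: hI; rewrite mem_head.
rewrite /Phi big_cons.
have hsplit : forall dl0, split_push V dl0 rest s' ->
    (\sum_(lf <- s') 3 ^ mus lf < 3 ^ mus (V, dl) + \sum_(lf <- rest) 3 ^ mus lf)%N.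
  move=> dl0 [i [j [hm ->]]]; rewrite !big_cons addnA ltn_add2r.
  have h1 : (mus (Defs.split1 V i j, dl0) < mus (V, dl))%N.
    by rewrite split1E; apply: mus_child => //; rewrite eqxx.
  have h2 : (mus (Defs.split2 V i j, dl0) < mus (V, dl))%N.
    by rewrite split2E; apply: mus_child => //; rewrite eqxx orbT.
  exact: pow3_two.
case: hst => [[_ ->]|[[_ [dls [hmc hsw]]]|[_ [_ hsp]]]].
- by rewrite -[X in (X < _)%N]add0n ltn_add2r expn_gt0.
- case: hsw => [[hsv ->]|[_ hsp]]; last exact: hsplit hsp.
  rewrite big_cons ltn_add2r ltn_exp2l //; apply: mus_repl.
  exact: repl_dec hS hmc hsv.
- exact: hsplit hsp.
Qed.
End Run.
Unset Implicit Arguments.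

Theorem lemma4 (R : realType) (p n m d l : nat) (D : data R p n m d l)
  (Hp : (0 < p)%N) (Hn : (0 < n)%N) (Hm : (0 < m)%N) (Hd : (0 < d)%N) (Hl : (0 < l)%N)
  (HK : convex_cone (pK D))
  (Hf : forall dl : comm m, jointly_convex (fun th x => pf D th x (bin R dl)))
  (Hg : forall dl : comm m, jointly_affine (fun th x => pg D th x (bin R dl)))
  (Hh : forall dl : comm m, jointly_affine (fun th x => ph D th x (bin R dl)))
  (HV : forall (dl : comm m) th, Vstar D dl th != -oo%E)
  (HTh : full_dim_polytope (Theta D))
  (HThs : Theta D `<=` ThstarU D)
  (Hea : 0 < eps_a D) (Her : 0 < eps_r D)
  (Hgamma : (0 < overlap D)%E)
  (Hsigma : forall dl : comm m, Delta D dl -> (0 < variability D dl)%E)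
  (L : seq (@leaf R p m)) (HL : valid_input D L)
  (run : nat -> seq (@leaf R p m))
  (Hrun0 : run 0%N = L)
  (Hrun : forall k : nat, step D (run k) (run k.+1)) :
  exists (k : nat) (V : @vert R p) (dl : comm m) (rest : seq (@leaf R p m)),
    run k = (V, dl) :: rest /\
    exists tho, Theta D tho /\ simp V `<=` ecball tho (psi D).
Proof.
have hpsi := psi_pos Hgamma Hsigma.
have [eps heps Heps] := eps_exists Hp hpsi.
have HI0 : forall lf, lf \in run 0%N -> Inv D lf.
  rewrite Hrun0 => lf hl; split; last exact: (proj2 (proj1 HL lf hl)).
  by move=> x hx; apply/(proj2 HL x); exists lf.
have HI : forall k lf, lf \in run k -> Inv D lf.
  elim=> [|k IH]; first exact: HI0.
  exact: step_inv (Hrun k) IH.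
case: (pselect (exists k V dl rest, run k = (V, dl) :: rest /\ maxsq V <= eps)).
  move=> [k [V [dl [rest [hk hM]]]]]; exists k, V, dl, rest; split=> //.
  exists (V ord0); split; last exact: Heps.
  have [hT _] : Inv D (V, dl) by apply: (HI k); rewrite hk mem_head.
  by apply: hT; exact: simp_vert.
move=> hno; exfalso.
have hbig : forall k V dl rest, run k = (V, dl) :: rest -> eps < maxsq V.
  move=> k V dl rest hk; rewrite ltNge; apply/negP => hM; apply: hno.
  by exists k, V, dl, rest.
have hdec : forall k, (Phi D heps (run k) + k <= Phi D heps (run 0%N))%N.
  elim=> [|k IH]; first by rewrite addn0.
  have := step_phi HV Her heps (Hrun k) (HI k) (hbig k); lia.
have := hdec (Phi D heps (run 0%N)).+1; lia.
Qed.
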